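(* Let $f=\frac1n\sum_{i=1}^nf_i$ with each $f_i$ differentiable, $\|\nabla f_i(x)\|\le G_i$ for all $x$, and $\nabla f_i$ $L_i$-Lipschitz. Let two proper samplings be given: an outer one with marginals $p'_i$, pair matrix $\mathbf P'$ and a vector $v'$ with $\mathbf P'-p'p'^\top\preceq\mathrm{Diag}(p'_1v'_1,\dots,p'_nv'_n)$, and an inner one with marginals $p_i$, pair matrix $\mathbf P$ and a vector $v$ with $\mathbf P-pp^\top\preceq\mathrm{Diag}(p_1v_1,\dots,p_nv_n)$. Let $Q=\sum_{i=1}^n\frac{v_iL_i^2}{p_in^2}$ and $Q'=\sum_{i=1}^n\frac{v'_iG_i^2}{p'_in^2}$. For the iterates of ProxSPIDER-AS (any stepsize $\eta>0$, any inner length $m$), for every $j\ge1$ and $1\le t\le m$, $$E\big[\|\mathcal V_t^{(j)}-\nabla f(x_t^{(j)})\|^2\big]\le Q\sum_{k=1}^tE\big[\|x_k^{(j)}-x_{k-1}^{(j)}\|^2\big]+Q'.$$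
   Context: A sampling is a random subset $S\subseteq[n]$ with marginals $\mathrm{Prob}(i\in S)>0$ and pair matrix with entries $\mathrm{Prob}(\{i,j\}\subseteq S)$; $\preceq$ is the positive semidefinite order. $r:\mathbb{R}^d\to\mathbb{R}$ has proximal mapping $\mathrm{prox}_{\eta r}(y)=\arg\min_x\{\frac1{2\eta}\|x-y\|^2+r(x)\}$ (nonempty). ProxSPIDER-AS: for $j=1,2,\dots$: $x_0^{(j)}=\tilde x^{(j)}$; draw $S^{(j)}$ from the outer sampling and set $\mathcal V_0^{(j)}=\sum_{i\in S^{(j)}}\frac1{np'_i}\nabla f_i(x_0^{(j)})$; $x_1^{(j)}=x_0^{(j)}$; for $t=1,\dots,m$: draw $S_t^{(j)}$ from the inner sampling, $\mathcal V_t^{(j)}=\sum_{i\in S_t^{(j)}}\frac1{np_i}(\nabla f_i(x_t^{(j)})-\nabla f_i(x_{t-1}^{(j)}))+\mathcal V_{t-1}^{(j)}$, $x_{t+1}^{(j)}\in\mathrm{prox}_{\eta r}(x_t^{(j)}-\eta\mathcal V_t^{(j)})$; then $\tilde x^{(j+1)}=x_{m+1}^{(j)}$. All sampled sets are drawn independently of all past randomness. *)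

(* Defs.v *)
From HB Require Import structures.
From mathcomp Require Import all_boot all_order all_algebra.
From mathcomp Require Import all_classical all_reals all_analysis.
Set Implicit Arguments. Unset Strict Implicit. Unset Printing Implicit Defensive.
Import Order.TTheory GRing.Theory Num.Theory.
Local Open Scope ring_scope.

Section Defs.
Context {R : realType}.

Definition dotv {d} (x y : 'rV[R]_d) : R := \sum_k x 0 k * y 0 k.
Definition sqnorm {d} (x : 'rV[R]_d) : R := \sum_k x 0 k ^+ 2.
Definition enorm {d} (x : 'rV[R]_d) : R := Num.sqrt (sqnorm x).

(* A sampling = probability mass function of a random subset S of [n]. *)
Definition is_pmf {n} (pS : {set 'I_n} -> R) :=
  (forall S, 0 <= pS S) /\ \sum_(S : {set 'I_n}) pS S = 1.
Definition marg {n} (pS : {set 'I_n} -> R) (i : 'I_n) : R :=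
  \sum_(S : {set 'I_n} | i \in S) pS S.
Definition pairmx {n} (pS : {set 'I_n} -> R) : 'M[R]_n :=
  \matrix_(i, j) \sum_(S : {set 'I_n} | (i \in S) && (j \in S)) pS S.
Definition proper_sampling {n} (pS : {set 'I_n} -> R) :=
  is_pmf pS /\ forall i, 0 < marg pS i.
Definition psd_le {n} (A B : 'M[R]_n) :=
  forall z : 'rV[R]_n, (z *m A *m z^T) 0 0 <= (z *m B *m z^T) 0 0.
Definition ESO {n} (pS : {set 'I_n} -> R) (v : 'I_n -> R) :=
  let p := \row_i marg pS i in
  psd_le (pairmx pS - p^T *m p) (diag_mx (\row_i (marg pS i * v i))).

Definition is_prox_selection {d} (eta : R) (r : 'rV[R]_d -> R)
  (pr : 'rV[R]_d -> 'rV[R]_d) :=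
  forall y x, (2 * eta)^-1 * sqnorm (pr y - y) + r (pr y)
              <= (2 * eta)^-1 * sqnorm (x - y) + r x.

Definition gradf {n d} (gf : 'I_n -> 'rV[R]_d -> 'rV[R]_d) (x : 'rV[R]_d) :=
  (n%:R)^-1 *: \sum_i gf i x.

Definition est {n d} (pS : {set 'I_n} -> R) (S : {set 'I_n})
  (g : 'I_n -> 'rV[R]_d) : 'rV[R]_d :=
  \sum_(i in S) (n%:R * marg pS i)^-1 *: g i.

(* one outer epoch: state t = (x_t, x_{t+1}, V_t) *)
Fixpoint epoch_state {n d} (gf : 'I_n -> 'rV[R]_d -> 'rV[R]_d)
  (po pin : {set 'I_n} -> R) (eta : R) (pr : 'rV[R]_d -> 'rV[R]_d)
  (x0 : 'rV[R]_d) (S0 : {set 'I_n}) (St : nat -> {set 'I_n}) (t : nat)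
  : 'rV[R]_d * 'rV[R]_d * 'rV[R]_d :=
  match t with
  | 0 => (x0, x0, est po S0 (fun i => gf i x0))
  | t'.+1 =>
    let: (xprev, xcur, Vprev) := epoch_state gf po pin eta pr x0 S0 St t' in
    let V := est pin (St t) (fun i => gf i xcur - gf i xprev) + Vprev in
    (xcur, pr (xcur - eta *: V), V)
  end.

(* randomness of one epoch: outer set S^(j) and inner sets S_1^(j)..S_m^(j)
   (S_t stored at index t-1) *)
Definition Edraw (n m : nat) := ({set 'I_n} * {ffun 'I_m -> {set 'I_n}})%type.
Definition e0 {n m} : Edraw n m := (finset.set0, [ffun => finset.set0]).

Definition inner_draw {n m} (e : Edraw n m) (t : nat) : {set 'I_n} :=
  if (insub t.-1 : option 'I_m) is Some o then e.2 o else finset.set0.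

Definition eprob {n m} (po pin : {set 'I_n} -> R) (e : Edraw n m) : R :=
  po e.1 * \prod_(o : 'I_m) pin (e.2 o).

Definition epoch_run {n d m} gf (po pin : {set 'I_n} -> R) eta pr
  (x0 : 'rV[R]_d) (e : Edraw n m) (t : nat) :=
  epoch_state gf po pin eta pr x0 e.1 (inner_draw e) t.

(* xtilde^(j+1) = x_{m+1}^(j) *)
Definition next_xtilde {n d m} gf (po pin : {set 'I_n} -> R) eta pr
  (x0 : 'rV[R]_d) (e : Edraw n m) : 'rV[R]_d :=
  (epoch_run gf po pin eta pr x0 e m).1.2.

Definition xtilde_from {n d m} gf (po pin : {set 'I_n} -> R) eta pr
  (x1 : 'rV[R]_d) (hs : seq (Edraw n m)) : 'rV[R]_d :=
  foldl (next_xtilde gf po pin eta pr) x1 hs.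

(* x_t^(j) and V_t^(j) as functions of the past epochs hs and the current e *)
Definition xiter {n d m} gf (po pin : {set 'I_n} -> R) eta pr (x1 : 'rV[R]_d)
  (hs : seq (Edraw n m)) (e : Edraw n m) (t : nat) : 'rV[R]_d :=
  (epoch_run gf po pin eta pr (xtilde_from gf po pin eta pr x1 hs) e t).1.1.
Definition Viter {n d m} gf (po pin : {set 'I_n} -> R) eta pr (x1 : 'rV[R]_d)
  (hs : seq (Edraw n m)) (e : Edraw n m) (t : nat) : 'rV[R]_d :=
  (epoch_run gf po pin eta pr (xtilde_from gf po pin eta pr x1 hs) e t).2.

(* expectation over the (product) law of all draws of epochs 1..j of a
   quantity depending on epochs 1..j-1 (hs) and epoch j (e) *)
Definition Eexp {n m} (po pin : {set 'I_n} -> R) (j : nat)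
  (F : seq (Edraw n m) -> Edraw n m -> R) : R :=
  \sum_(h : j.-tuple (Edraw n m))
     (\prod_(e <- h) eprob po pin e) * F (take j.-1 h) (nth e0 h j.-1).

End Defs.

(* Main.v *)
Require Import Defs.
From HB Require Import structures.
From mathcomp Require Import all_boot all_order all_algebra.
From mathcomp Require Import all_classical all_reals all_analysis.
From mathcomp Require Import ring lra zify.
Import Order.TTheory GRing.Theory Num.Theory.
Local Open Scope ring_scope.

Lemma tuple_split (R : realType) (T : finType) (k : nat) (F : k.+1.-tuple T -> R) :
  \sum_(h : k.+1.-tuple T) F h = \sum_(t : k.-tuple T) \sum_(x : T) F [tuple of rcons t x].
Proof.
rewrite pair_bigA /=.
have inj : injective (fun p : k.-tuple T * T => [tuple of rcons p.1 p.2]).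
  move=> [a x] [b y] /(congr1 val) /= /rcons_inj [/val_inj -> ->] //.
have hb := inj_card_bij inj.
rewrite (reindex _ (onW_bij _ (hb _))) //.
by rewrite card_prod !card_tuple expnS mulnC.
Qed.

Lemma Eexp_split (R : realType) n m (po pin : {set 'I_n} -> R) k
  (F : seq (Edraw n m) -> Edraw n m -> R) :
  Eexp po pin k.+1 F = \sum_(t : k.-tuple (Edraw n m))
     (\prod_(e <- t) eprob po pin e) * \sum_x (eprob po pin x * F t x).
Proof.
rewrite /Eexp tuple_split /=; apply: eq_bigr => t _.
rewrite mulr_sumr; apply: eq_bigr => x _.
rewrite big_rcons /= -cats1 take_size_cat ?size_tuple //.
rewrite nth_cat size_tuple ltnn subnn /=. by rewrite mulrA.
Qed.

Lemma weights1 (R : realType) n m (po pin : {set 'I_n} -> R) k :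
  \sum_x eprob (m:=m) po pin x = 1 ->
  \sum_(t : k.-tuple (Edraw n m)) \prod_(e <- t) eprob po pin e = 1.
Proof.
move=> H1; elim: k => [|k IH].
  rewrite (eq_bigr (fun _ => 1)); last by move=> t _; rewrite tuple0 big_nil.
  by rewrite sumr_const card_tuple expn0.
rewrite tuple_split -[RHS]IH; apply: eq_bigr => t _.
transitivity (\sum_(x : Edraw n m) (\prod_(e <- t) eprob po pin e) * eprob po pin x).
  by apply: eq_bigr => x _ /=; rewrite big_rcons.
by rewrite -mulr_sumr H1 mulr1.
Qed.

Lemma quad (R : realType) n (A : 'M[R]_n) (z : 'rV[R]_n) :
  (z *m A *m z^T) 0 0 = \sum_i \sum_j z 0 i * A i j * z 0 j.
Proof.
rewrite mxE; under eq_bigr do rewrite !mxE mulr_suml.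
by rewrite exchange_big.
Qed.

Lemma core (R : realType) n (pS : {set 'I_n} -> R) (v : 'I_n -> R) :
  is_pmf pS -> ESO pS v -> forall (D : R) (z : 'I_n -> R),
  \sum_S pS S * (D + \sum_(i in S) z i - \sum_i marg pS i * z i) ^+ 2
    <= D ^+ 2 + \sum_i marg pS i * v i * z i ^+ 2.
Proof.
move=> [_ sum1] eso D z.
set c := \sum_i marg pS i * z i.
have h1 : \sum_S pS S * (\sum_(i in S) z i) = c.
  under eq_bigr do rewrite mulr_sumr big_mkcond /=.
  rewrite exchange_big /c; apply: eq_bigr => i _.
  rewrite /marg mulr_suml [RHS]big_mkcond /=; apply: eq_bigr => S _.
  by case: (i \in S); rewrite ?mul0r.
have h2 : \sum_S pS S * (\sum_(i in S) z i) ^+ 2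
   = \sum_i \sum_j z i * pairmx pS i j * z j.
  have e : forall S, pS S * (\sum_(i in S) z i) ^+ 2 =
     \sum_i \sum_j (if (i \in S) && (j \in S) then pS S * (z i * z j) else 0).
    move=> S; rewrite expr2 big_distrlr /= mulr_sumr big_mkcond /=.
    apply: eq_bigr => i _; rewrite big_mkcond mulr_sumr /=.
    case: (i \in S) => /=; last by rewrite big1.
    by apply: eq_bigr => j _; case: (j \in S); rewrite ?mulr0.
  under eq_bigr do rewrite e.
  rewrite exchange_big; apply: eq_bigr => i _.
  rewrite exchange_big; apply: eq_bigr => j _.
  rewrite /pairmx mxE [RHS]mulrAC [RHS]mulrC mulr_suml [RHS]big_mkcond /=.
  by apply: eq_bigr => S _; case: ifP => //; rewrite mul0r.
have h3 := eso (\row_i z i).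
rewrite !quad in h3.
have h4 : \sum_i \sum_j (\row_i0 z i0) 0 i * (pairmx pS - (\row_i0 marg pS i0)^T *m \row_i0 marg pS i0) i j * (\row_i0 z i0) 0 j
   = \sum_i \sum_j z i * pairmx pS i j * z j - c ^+ 2.
  rewrite expr2 mulr_suml -sumrB; apply: eq_bigr => i _.
  rewrite mulr_sumr -sumrB; apply: eq_bigr => j _.
  rewrite !mxE big_ord1 !mxE; ring.
have h5 : \sum_i \sum_j (\row_i0 z i0) 0 i * diag_mx (\row_i0 (marg pS i0 * v i0)) i j * (\row_i0 z i0) 0 j
   = \sum_i marg pS i * v i * z i ^+ 2.
  apply: eq_bigr => i _; rewrite (bigD1 i) //= big1 ?addr0.
    by rewrite !mxE eqxx mulr1n; ring.
  by move=> j ji; rewrite !mxE eq_sym (negbTE ji) mulr0n mulr0 mul0r.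
rewrite h4 h5 in h3.
have e : forall S, pS S * (D + \sum_(i in S) z i - c) ^+ 2 =
   (D - c) ^+ 2 * pS S + 2 * (D - c) * (pS S * \sum_(i in S) z i)
   + pS S * (\sum_(i in S) z i) ^+ 2 by move=> S; ring.
under eq_bigr do rewrite e.
rewrite !big_split /= -!mulr_sumr sum1 h1 h2.
nra.
Qed.

Lemma v_ge0 (R : realType) n (pS : {set 'I_n} -> R) (v : 'I_n -> R) :
  proper_sampling pS -> ESO pS v -> forall i, 0 <= v i.
Proof.
move=> [pmf mpos] eso i.
have := @core _ _ _ _ pmf eso 0 (fun k => (k == i)%:R).
rewrite [X in _ <= _ + X](bigD1 i) //= [X in _ <= _ + (_ + X)]big1 ?addr0; last first.
  by move=> k ki; rewrite (negbTE ki) expr2 !mulr0.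
rewrite eqxx expr2 !mul0r add0r expr1n mulr1 => h.
rewrite -(pmulr_rge0 _ (mpos i)); apply: le_trans h.
apply: sumr_ge0 => S _; apply: mulr_ge0; first by case: pmf.
exact: sqr_ge0.
Qed.

Lemma vec_core (R : realType) n d (pS : {set 'I_n} -> R) (v : 'I_n -> R) :
  (0 < n)%N -> proper_sampling pS -> ESO pS v ->
  forall (D : 'rV[R]_d) (Dl : 'I_n -> 'rV[R]_d),
  \sum_S pS S * sqnorm (D + est pS S Dl - (n%:R)^-1 *: \sum_i Dl i)
   <= sqnorm D + \sum_i v i * sqnorm (Dl i) / (marg pS i * n%:R ^+ 2).
Proof.
move=> n0 [pmf mpos] eso D Dl.
have nz : (n%:R : R) != 0 by rewrite pnatr_eq0 -lt0n.
have pz : forall i, marg pS i != 0 by move=> i; rewrite gt_eqF.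
set z := fun i k => (n%:R * marg pS i)^-1 * Dl i 0 k.
have entry : forall S k, (D + est pS S Dl - (n%:R)^-1 *: \sum_i Dl i) 0 k
   = D 0 k + \sum_(i in S) z i k - \sum_i marg pS i * z i k.
  move=> S k; rewrite !mxE /est !summxE mulr_sumr.
  congr (_ + _ - _).
    by apply: eq_bigr => i _; rewrite mxE.
  apply: eq_bigr => i _; rewrite /z invfM -!mulrA mulrCA mulVKf //.
under eq_bigr do rewrite /sqnorm mulr_sumr.
rewrite exchange_big /=.
have rhs : sqnorm D + \sum_i v i * sqnorm (Dl i) / (marg pS i * n%:R ^+ 2)
   = \sum_k (D 0 k ^+ 2 + \sum_i marg pS i * v i * z i k ^+ 2).
  rewrite big_split /= exchange_big /=; congr (_ + _).
  apply: eq_bigr => i _; rewrite /sqnorm mulr_sumr mulr_suml.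
  apply: eq_bigr => k _; rewrite /z; field.
  by rewrite nz pz.
rewrite rhs; apply: ler_sum => k _.
under eq_bigr do rewrite entry.
exact: (@core _ _ _ _ pmf eso).
Qed.

Lemma resample_gen (R : realType) (T U : finType) (w c : T -> R) (q : U -> R)
  (proj : T -> U) (upd : T -> U -> T) (h : T -> R) :
  \sum_u q u = 1 ->
  (forall e, w e = c e * q (proj e)) ->
  (forall e u, c (upd e u) = c e) ->
  (forall e u, proj (upd e u) = u) ->
  (forall e u, upd (upd e u) (proj e) = e) ->
  \sum_e w e * h e = \sum_e w e * \sum_u q u * h (upd e u).
Proof.
move=> q1 wE cu pu uu.
transitivity (\sum_e \sum_u c e * q (proj e) * q u * h (upd e u)); last first.
  apply: eq_bigr => e _; rewrite mulr_sumr wE; apply: eq_bigr => u _; ring.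
rewrite pair_bigA /=.
pose phi := fun p : T * U => (upd p.1 p.2, proj p.1).
have inj : injective phi.
  apply: (can_inj (g := phi)) => -[e u]; rewrite /phi /= pu uu //.
rewrite (reindex_inj inj) /phi /=.
under [RHS]eq_bigr => p _ do rewrite cu pu uu.
rewrite -(pair_bigA _ (fun e u => c e * q u * q (proj e) * h e)) /=.
apply: eq_bigr => e _; transitivity (\sum_u q u * (c e * q (proj e) * h e)).
  by rewrite -mulr_suml q1 mul1r wE.
by apply: eq_bigr => u _; ring.
Qed.

Definition upd_in {n m} (e : Edraw n m) (o : 'I_m) (S : {set 'I_n}) : Edraw n m :=
  (e.1, [ffun o' => if o' == o then S else e.2 o']).

Lemma resample_in (R : realType) n m (po pin : {set 'I_n} -> R) (o : 'I_m)
  (h : Edraw n m -> R) : \sum_S pin S = 1 ->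
  \sum_e eprob po pin e * h e
  = \sum_e eprob po pin e * \sum_S pin S * h (upd_in e o S).
Proof.
move=> p1.
apply: (@resample_gen R _ _ (eprob po pin) (fun e => po e.1 * \prod_(o' | o' != o) pin (e.2 o')) _
   (fun e => e.2 o) (fun e S => upd_in e o S) h) => //.
- by move=> e; rewrite /eprob (bigD1 o) //=; ring.
- move=> e u /=; congr (_ * _); apply: eq_bigr => o' /negbTE H.
  by rewrite ffunE H.
- by move=> e u /=; rewrite ffunE eqxx.
- move=> [e1 e2] u; rewrite /upd_in /=; congr pair; apply/ffunP => o'.
  by rewrite !ffunE; case: eqP => // ->.
Qed.

Lemma resample_out (R : realType) n m (po pin : {set 'I_n} -> R)
  (h : Edraw n m -> R) : \sum_S po S = 1 ->
  \sum_e eprob po pin e * h e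
  = \sum_e eprob po pin e * \sum_S po S * h (S, e.2).
Proof.
move=> p1.
apply: (@resample_gen R _ _ (eprob po pin) (fun e => \prod_o pin (e.2 o)) _
   (fun e => e.1) (fun e S => (S, e.2)) h) => //.
- by move=> e; rewrite /eprob mulrC.
- by case.
Qed.

Lemma eprob_ge0 (R : realType) n m (po pin : {set 'I_n} -> R) (e : Edraw n m) :
  is_pmf po -> is_pmf pin -> 0 <= eprob po pin e.
Proof.
move=> [h1 _] [h2 _]; apply: mulr_ge0 => //; exact: prodr_ge0.
Qed.

Lemma eprob_sum1 (R : realType) n m (po pin : {set 'I_n} -> R) :
  is_pmf po -> is_pmf pin -> \sum_e eprob (m:=m) po pin e = 1.
Proof.
move=> [_ h1] [_ h2].
rewrite /eprob -(pair_bigA _ (fun S (f : {ffun 'I_m -> {set 'I_n}}) => po S * \prod_o pin (f o))) /=.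
under eq_bigr do rewrite -mulr_sumr -(bigA_distr_bigA (fun _ S => pin S)) /= h2.
by rewrite -big_distrl /= h1 big1 ?mulr1.
Qed.

Lemma st_succ (R : realType) n d (gf : 'I_n -> 'rV[R]_d -> 'rV[R]_d) po pin eta pr x0 S0 St t :
  epoch_state gf po pin eta pr x0 S0 St t.+1 =
  let s := epoch_state gf po pin eta pr x0 S0 St t in
  let V := est pin (St t.+1) (fun i => gf i s.1.2 - gf i s.1.1) + s.2 in
  (s.1.2, pr (s.1.2 - eta *: V), V).
Proof. by rewrite /=; case: (epoch_state _ _ _ _ _ _ _ _ t) => [[a b] c]. Qed.

Lemma st_ext (R : realType) n d (gf : 'I_n -> 'rV[R]_d -> 'rV[R]_d) po pin eta pr x0 S0 St St' t :
  (forall k, (0 < k <= t)%N -> St k = St' k) ->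
  epoch_state gf po pin eta pr x0 S0 St t = epoch_state gf po pin eta pr x0 S0 St' t.
Proof.
elim: t => [//|t IH] H.
rewrite !st_succ IH; last by move=> k /andP[k0 kt]; apply: H; rewrite k0 /= ltnW.
by rewrite H // leqnn.
Qed.

Lemma inner_upd n m (e : Edraw n m) (o : 'I_m) S k :
  (0 < k <= o)%N -> inner_draw (upd_in e o S) k = inner_draw e k.
Proof.
move=> /andP[k0 ko]; rewrite /inner_draw; case: insubP => [u _ hu|] //=.
rewrite ffunE; case: eqP => // E; exfalso; move: hu; rewrite E => hu.
move: hu => /= hu; lia.
Qed.

Lemma inner_upd_o n m (e : Edraw n m) (o : 'I_m) S :
  inner_draw (upd_in e o S) o.+1 = S.
Proof.
rewrite /inner_draw /=; case: insubP => [u _ hu|]; last by rewrite ltn_ord.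
have -> : u = o by apply: val_inj.
by rewrite ffunE eqxx.
Qed.

Lemma sqnorm_ge0 (R : realType) d (a : 'rV[R]_d) : 0 <= sqnorm a.
Proof. by apply: sumr_ge0 => k _; exact: sqr_ge0. Qed.

Lemma sqnorm0 (R : realType) d : sqnorm (0 : 'rV[R]_d) = 0.
Proof. by rewrite /sqnorm big1 // => k _; rewrite mxE expr0n. Qed.

Lemma sq_lip (R : realType) d (a b : 'rV[R]_d) (L : R) :
  enorm a <= L * enorm b -> sqnorm a <= L ^+ 2 * sqnorm b.
Proof.
have sa : sqnorm a = enorm a ^+ 2 by rewrite /enorm sqr_sqrtr // sqnorm_ge0.
have sb : sqnorm b = enorm b ^+ 2 by rewrite /enorm sqr_sqrtr // sqnorm_ge0.
rewrite sa sb; have := sqrtr_ge0 (sqnorm a); rewrite -/(enorm a) => h1 h2.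
nra.
Qed.

Lemma sq_bd (R : realType) d (a : 'rV[R]_d) (G : R) :
  enorm a <= G -> sqnorm a <= G ^+ 2.
Proof.
have sa : sqnorm a = enorm a ^+ 2 by rewrite /enorm sqr_sqrtr // sqnorm_ge0.
rewrite sa; have := sqrtr_ge0 (sqnorm a); rewrite -/(enorm a) => h1 h2.
nra.
Qed.

Lemma zid (V : zmodType) (a b g c : V) : a + b - (g + c) = b - g + a - c.
Proof. by rewrite opprD !addrA [a + b]addrC (addrAC b a). Qed.

Definition errE {R : realType} {n d m} (gf : 'I_n -> 'rV[R]_d -> 'rV[R]_d) po pin eta pr x0 (e : Edraw n m) t :=
  sqnorm ((epoch_run gf po pin eta pr x0 e t).2 - gradf gf (epoch_run gf po pin eta pr x0 e t).1.1).
Definition dxE {R : realType} {n d m} (gf : 'I_n -> 'rV[R]_d -> 'rV[R]_d) po pin eta pr x0 (e : Edraw n m) k :=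
  sqnorm ((epoch_run gf po pin eta pr x0 e k).1.1 - (epoch_run gf po pin eta pr x0 e k.-1).1.1).

Lemma step (R : realType) n d m (gf : 'I_n -> 'rV[R]_d -> 'rV[R]_d) (L : 'I_n -> R)
  (po pin : {set 'I_n} -> R) (v : 'I_n -> R) eta pr x0 t :
  (0 < n)%N ->
  (forall i x y, enorm (gf i x - gf i y) <= L i * enorm (x - y)) ->
  is_pmf po -> proper_sampling pin -> ESO pin v -> (t < m)%N ->
  \sum_e eprob (m:=m) po pin e * errE gf po pin eta pr x0 e t.+1
  <= \sum_e eprob (m:=m) po pin e * errE gf po pin eta pr x0 e t
     + (\sum_i v i * L i ^+ 2 / (marg pin i * n%:R ^+ 2))
       * \sum_e eprob (m:=m) po pin e * dxE gf po pin eta pr x0 e t.+1.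
Proof.
move=> n0 Lip pmo prin eso tm.
have vge0 := @v_ge0 _ _ _ _ prin eso.
have pmi : is_pmf pin by case: prin.
have [_ p1] := pmi.
set Q := (\sum_i v i * L i ^+ 2 / (marg pin i * n%:R ^+ 2)).
pose o : 'I_m := Ordinal tm.
rewrite (@resample_in R n m po pin o (fun e => errE gf po pin eta pr x0 e t.+1) p1).
rewrite mulr_sumr -big_split /=.
apply: ler_sum => e _.
rewrite mulrCA -mulrDr.
apply: ler_wpM2l; first exact: eprob_ge0.
have Hs : forall S, epoch_state gf po pin eta pr x0 e.1 (inner_draw (upd_in e o S)) t
               = epoch_state gf po pin eta pr x0 e.1 (inner_draw e) t.
  by move=> S; apply: st_ext => k hk; apply: inner_upd.
set s := epoch_state gf po pin eta pr x0 e.1 (inner_draw e) t in Hs.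
set Dl := fun i => gf i s.1.2 - gf i s.1.1.
have Herr : forall S, errE gf po pin eta pr x0 (upd_in e o S) t.+1
   = sqnorm ((s.2 - gradf gf s.1.1) + est pin S Dl - (n%:R)^-1 *: \sum_i Dl i).
  move=> S; rewrite /errE /epoch_run st_succ /= Hs.
  have -> : inner_draw (upd_in e o S) t.+1 = S by exact: (@inner_upd_o _ _ e o S).
  have -> : gradf gf s.1.2 = gradf gf s.1.1 + (n%:R)^-1 *: \sum_i Dl i.
    by rewrite /gradf /Dl sumrB scalerBr addrC subrK.
  by rewrite zid.
under eq_bigr do rewrite Herr.
apply: le_trans; first exact: (@vec_core R n d pin v n0 prin eso (s.2 - gradf gf s.1.1) Dl).
apply: lerD; first by [].
have -> : dxE gf po pin eta pr x0 e t.+1 = sqnorm (s.1.2 - s.1.1).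
  by rewrite /dxE /epoch_run st_succ.
rewrite /Q mulr_suml; apply: ler_sum => i _.
have a0 : 0 <= v i / (marg pin i * n%:R ^+ 2).
  apply: divr_ge0 => //; apply: mulr_ge0; last exact: exprn_ge0.
  by case: prin => _ /(_ i) /ltW.
rewrite mulrAC (_ : v i * L i ^+ 2 / (marg pin i * n%:R ^+ 2) * sqnorm (s.1.2 - s.1.1) = v i / (marg pin i * n%:R ^+ 2) * (L i ^+ 2 * sqnorm (s.1.2 - s.1.1))); last by ring.
apply: ler_wpM2l => //; apply: sq_lip; exact: Lip.
Qed.

Lemma base (R : realType) n d m (gf : 'I_n -> 'rV[R]_d -> 'rV[R]_d) (G : 'I_n -> R)
  (po pin : {set 'I_n} -> R) (v' : 'I_n -> R) eta pr x0 :
  (0 < n)%N ->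
  (forall i x, enorm (gf i x) <= G i) ->
  proper_sampling po -> ESO po v' -> is_pmf pin ->
  \sum_e eprob (m:=m) po pin e * errE gf po pin eta pr x0 e 0
  <= \sum_i v' i * G i ^+ 2 / (marg po i * n%:R ^+ 2).
Proof.
move=> n0 Gb pro eso pmi.
have vge0 := @v_ge0 _ _ _ _ pro eso.
have pmo : is_pmf po by case: pro.
have [_ p1] := pmo.
set Q' := (\sum_i v' i * G i ^+ 2 / (marg po i * n%:R ^+ 2)).
rewrite (@resample_out R n m po pin (fun e => errE gf po pin eta pr x0 e 0) p1).
apply: (@le_trans _ _ (\sum_e eprob (m:=m) po pin e * Q')); last first.
  by rewrite -mulr_suml eprob_sum1 // mul1r.
apply: ler_sum => e _; apply: ler_wpM2l; first exact: eprob_ge0.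
have := @vec_core R n d po v' n0 pro eso 0 (fun i => gf i x0).
under eq_bigr do rewrite add0r.
rewrite sqnorm0 add0r => h.
rewrite /errE /epoch_run /gradf /=. apply: le_trans h _.
rewrite /Q'; apply: ler_sum => i _.
have a0 : 0 <= v' i / (marg po i * n%:R ^+ 2).
  apply: divr_ge0 => //; apply: mulr_ge0; last exact: exprn_ge0.
  by case: pro => _ /(_ i) /ltW.
rewrite mulrAC [X in _ <= X]mulrAC.
apply: ler_wpM2l => //; exact: sq_bd.
Qed.

Lemma epoch (R : realType) n d m (gf : 'I_n -> 'rV[R]_d -> 'rV[R]_d) (G L : 'I_n -> R)
  (po pin : {set 'I_n} -> R) (v' v : 'I_n -> R) eta pr x0 :
  (0 < n)%N ->
  (forall i x, enorm (gf i x) <= G i) ->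
  (forall i x y, enorm (gf i x - gf i y) <= L i * enorm (x - y)) ->
  proper_sampling po -> ESO po v' -> proper_sampling pin -> ESO pin v ->
  forall t, (t <= m)%N ->
  \sum_e eprob (m:=m) po pin e * errE gf po pin eta pr x0 e t
  <= (\sum_i v i * L i ^+ 2 / (marg pin i * n%:R ^+ 2))
      * \sum_(1 <= k < t.+1) \sum_e eprob (m:=m) po pin e * dxE gf po pin eta pr x0 e k
     + \sum_i v' i * G i ^+ 2 / (marg po i * n%:R ^+ 2).
Proof.
move=> n0 Gb Lip pro esoo pri esoi.
have pmo : is_pmf po by case: pro.
have pmi : is_pmf pin by case: pri.
elim=> [_|t IH tm].
  rewrite big_geq // mulr0 add0r; exact: base.
apply: le_trans; first exact: (@step R n d m gf L po pin v eta pr x0 t n0 Lip pmo pri esoi tm).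
rewrite big_nat_recr //= mulrDr addrAC; apply: lerD => //.
exact: IH (ltnW tm).
Qed.

Theorem lemma6p1 (R : realType) (n d m : nat)
  (f : 'I_n -> 'rV[R]_d -> R) (gf : 'I_n -> 'rV[R]_d -> 'rV[R]_d)
  (G L : 'I_n -> R) (po pin : {set 'I_n} -> R) (v' v : 'I_n -> R)
  (r : 'rV[R]_d -> R) (eta : R) (pr : 'rV[R]_d -> 'rV[R]_d)
  (x1 : 'rV[R]_d) :
  (0 < n)%N ->
  (forall i x, differentiable (f i) x) ->
  (forall i x u, 'D_u (f i) x = dotv (gf i x) u) ->
  (forall i x, enorm (gf i x) <= G i) ->
  (forall i x y, enorm (gf i x - gf i y) <= L i * enorm (x - y)) ->
  proper_sampling po -> ESO po v' ->
  proper_sampling pin -> ESO pin v ->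
  0 < eta -> is_prox_selection eta r pr ->
  forall j t : nat, (1 <= j)%N -> (1 <= t <= m)%N ->
  Eexp (m := m) po pin j
    (fun hs e => sqnorm (Viter gf po pin eta pr x1 hs e t
                         - gradf gf (xiter gf po pin eta pr x1 hs e t)))
  <= (\sum_i v i * L i ^+ 2 / (marg pin i * n%:R ^+ 2))
       * \sum_(1 <= k < t.+1)
           Eexp (m := m) po pin j
             (fun hs e => sqnorm (xiter gf po pin eta pr x1 hs e k
                                  - xiter gf po pin eta pr x1 hs e k.-1))
     + \sum_i v' i * G i ^+ 2 / (marg po i * n%:R ^+ 2).
Proof.
move=> n0 _ _ Gb Lip pro esoo pri esoi _ _ j t j1 /andP[t1 tm].
have pmo : is_pmf po by case: pro.
have pmi : is_pmf pin by case: pri.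
case: j j1 => [//|j'] _.
rewrite Eexp_split.
under [X in _ <= _ * X + _]eq_bigr => k _ do rewrite Eexp_split.
rewrite exchange_big /= mulr_sumr.
have W := (@weights1 R n m po pin j' (@eprob_sum1 R n m po pin pmo pmi)).
rewrite -[X in _ <= _ + X]mul1r -[X in _ <= _ + X * _]W.
rewrite mulr_suml -big_split /=.
apply: ler_sum => h _.
rewrite -mulr_sumr mulrCA -mulrDr.
apply: ler_wpM2l.
  by apply: prodr_ge0 => e _; exact: eprob_ge0.
exact: (@epoch R n d m gf G L po pin v' v eta pr (xtilde_from gf po pin eta pr x1 h) n0 Gb Lip pro esoo pri esoi t tm).
Qed.
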